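(* On $\ell^2(\mathbb{N}_0)$ (indices starting at $0$) let $\mathbf{L}_1$ be the symmetric tridiagonal infinite matrix with zero diagonal and $[\mathbf{L}_1]_{m,m+1}=[\mathbf{L}_1]_{m+1,m}=\sqrt{m+1}$ for $m\ge0$, and let $\mathbf{L}_3=\operatorname{diag}(0,-1,0,-1,-1,-1,\dots)$. For $k\in\mathbb{Z}\setminus\{0\}$ set $\mathbf{C}_k=ik\mathbf{L}_1-\mathbf{L}_3$ and let $\mathbf{P}_k$ be the infinite matrix equal to the identity except that its upper-left $4\times4$ block is $$\begin{pmatrix}1&-i\alpha/k&0&0\\ i\alpha/k&1&0&0\\0&0&1&-i\beta/2k\\0&0&i\beta/2k&1\end{pmatrix}.$$ With $\alpha=\beta=1/3$ for all $k$, one has, for all $k\in\mathbb{Z}\setminus\{0\}$, $$\mathbf{C}_k^*\mathbf{P}_k+\mathbf{P}_k\mathbf{C}_k\ \ge\ 2\mu\,\mathbf{P}_k,\qquad\mu=0.0206,$$ in the sense of quadratic forms, i.e. $\langle \mathbf{C}_ku,\mathbf{P}_ku\rangle+\langle\mathbf{P}_ku,\mathbf{C}_ku\rangle\ge2\mu\langle u,\mathbf{P}_ku\rangle$ for all finitely supported $u\in\ell^2(\mathbb{N}_0)$.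
   Context: $\langle\cdot,\cdot\rangle$ is the standard (sesquilinear) inner product on $\ell^2(\mathbb{N}_0)$ and $\mathbf{C}_k^*$ the Hermitian adjoint. *)

(* Defs.v *)
From HB Require Import structures.
From mathcomp Require Import all_boot all_order all_algebra.
From mathcomp Require Import complex.
Set Implicit Arguments. Unset Strict Implicit. Unset Printing Implicit Defensive.
Import Order.TTheory GRing.Theory Num.Theory.
Local Open Scope ring_scope.
Local Open Scope complex_scope.

(* Infinite matrices on l^2(N_0) are represented by their entries
   A m n (row m, column n, indices from 0); vectors by u : nat -> C. *)

Section Defs.
Variable R : rcfType.
Local Notation C := R[i].

Definition L1 (m n : nat) : C :=
  if n == m.+1 then (Num.sqrt (m.+1)%:R)%:C
  else if m == n.+1 then (Num.sqrt (n.+1)%:R)%:C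
  else 0.

Definition L3 (m n : nat) : C :=
  if m == n then (if (m == 0)%N || (m == 2)%N then 0 else -1) else 0.

Definition Cmat (k : int) (m n : nat) : C :=
  'i * k%:~R * L1 m n - L3 m n.

Definition Pmat (alpha beta : C) (k : int) (m n : nat) : C :=
  if (m == 0)%N && (n == 1)%N then - 'i * alpha / k%:~R
  else if (m == 1)%N && (n == 0)%N then 'i * alpha / k%:~R
  else if (m == 2)%N && (n == 3)%N then - 'i * beta / (2 * k%:~R)
  else if (m == 3)%N && (n == 2)%N then 'i * beta / (2 * k%:~R)
  else if m == n then 1 else 0.

(* action of an infinite matrix on a vector supported in [0, N) *)
Definition mapply (N : nat) (A : nat -> nat -> C) (u : nat -> C) : nat -> C :=
  fun m => \sum_(j < N) A m j * u j.

(* <a, b> = sum_m a_m * conj(b_m), truncated to indices < M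
   (exact whenever a or b is supported in [0, M)) *)
Definition inner (M : nat) (a b : nat -> C) : C :=
  \sum_(m < M) a m * (b m)^*.

End Defs.

Arguments L1 {R}.
Arguments L3 {R}.
Arguments Cmat {R}.
Arguments Pmat {R}.

(* Main.v *)
Require Import Defs.
From HB Require Import structures.
From mathcomp Require Import all_boot all_order all_algebra.
From mathcomp Require Import complex.
From mathcomp Require Import ring lra zify.
Import Order.TTheory GRing.Theory Num.Theory.
Local Open Scope ring_scope.
Local Open Scope complex_scope.

Section H.
Variable R : rcfType.
Local Notation C := R[i].

Lemma sum_ext (n m : nat) (F : nat -> C) : (n <= m)%N ->
  (forall j, (n <= j)%N -> F j = 0) -> \sum_(j < n) F j = \sum_(j < m) F j.
Proof.
move=> nm H; rewrite (big_ord_widen m F nm) big_mkcond; apply: eq_bigr => i _.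
by case: ifP => // /negbT; rewrite -leqNgt => /H ->.
Qed.

Lemma sum1 n (F : nat -> C) j1 : (j1 < n)%N -> (forall j, j != j1 -> F j = 0) ->
  \sum_(j < n) F j = F j1.
Proof.
move=> h H; rewrite (bigD1 (Ordinal h)) //= big1 ?addr0 // => i /eqP ne.
by apply: H; apply/eqP => e; apply: ne; apply: val_inj.
Qed.

Lemma sum2 n (F : nat -> C) j1 j2 : (j1 < n)%N -> (j2 < n)%N -> j1 != j2 ->
  (forall j, j != j1 -> j != j2 -> F j = 0) ->
  \sum_(j < n) F j = F j1 + F j2.
Proof.
move=> h1 h2 ne H.
rewrite (eq_bigr (fun j : 'I_n => (if val j == j1 then F j else 0) + (if val j == j1 then 0 else F j))); last first.
  by move=> i _; case: ifP; rewrite ?addr0 ?add0r.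
rewrite big_split /= (@sum1 n (fun j => if j == j1 then F j else 0) j1 h1); last first.
  by move=> j /negbTE ->.
rewrite (@sum1 n (fun j => if j == j1 then 0 else F j) j2 h2); last first.
  move=> j nj; case: ifP => // /negbT h; exact: H h nj.
by rewrite eqxx eq_sym (negbTE ne).
Qed.

Lemma L1C m j : L1 m j = L1 j m :> C.
Proof.
rewrite /L1; case: (eqVneq j m.+1) => [e|h1]; first by subst; rewrite ?eqxx ?ltn_eqF.
case: (eqVneq m j.+1) => [e|h2]; first by subst; rewrite ?eqxx ?ltn_eqF.
done.
Qed.

Lemma conjE (x : C) : Num.conj x = conjc x.
Proof. by []. Qed.

Lemma L1R m j : Num.conj (L1 m j) = L1 m j :> C.
Proof. rewrite conjE. by rewrite /L1; case: ifP => _; [|case: ifP => _]; rewrite ?conjc_real ?conjc0. Qed.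

Lemma ReD (x y : C) : complex.Re (x + y) = complex.Re x + complex.Re y. Proof. by case: x => ? ?; case: y => ? ?; reflexivity. Qed.
Lemma ImD (x y : C) : complex.Im (x + y) = complex.Im x + complex.Im y. Proof. by case: x => ? ?; case: y => ? ?; reflexivity. Qed.
Lemma ReN (x : C) : complex.Re (- x) = - complex.Re x. Proof. by case: x => ? ?; reflexivity. Qed.
Lemma ImN (x : C) : complex.Im (- x) = - complex.Im x. Proof. by case: x => ? ?; reflexivity. Qed.
Lemma ReM (x y : C) : complex.Re (x * y) = complex.Re x * complex.Re y - complex.Im x * complex.Im y. Proof. by case: x => ? ?; case: y => ? ?; reflexivity. Qed.
Lemma ImM (x y : C) : complex.Im (x * y) = complex.Re x * complex.Im y + complex.Im x * complex.Re y. Proof. by case: x => ? ?; case: y => ? ?; reflexivity. Qed.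
Lemma ReJ (x : C) : complex.Re (Num.conj x) = complex.Re x. Proof. by case: x => ? ?; reflexivity. Qed.
Lemma ImJ (x : C) : complex.Im (Num.conj x) = - complex.Im x. Proof. by case: x => ? ?; reflexivity. Qed.
Lemma ReC (r : R) : complex.Re (r%:C) = r. Proof. by []. Qed.
Lemma ImC (r : R) : complex.Im (r%:C) = 0. Proof. by []. Qed.
Lemma Rei : complex.Re ('i : C) = 0. Proof. by []. Qed.
Lemma Imi : complex.Im ('i : C) = 1. Proof. by []. Qed.
Lemma Re0 : complex.Re (0 : C) = 0. Proof. by []. Qed.
Lemma Im0 : complex.Im (0 : C) = 0. Proof. by []. Qed.

End H.

Definition blkC (R : rcfType) (a b : R) (z zc x y : R[i]) : R[i] :=
  a%:C * (x * Num.conj x) + b%:C * (y * Num.conj y) + z * (x * Num.conj y) + zc * (y * Num.conj x).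

Arguments blkC {R}.

Lemma blkC_ge0 (R : rcfType) (a b m : R) (z zc x y : R[i]) : 0 < a ->
  Num.conj zc = z -> z * zc = m%:C -> m <= a * b -> 0 <= blkC a b z zc x y.
Proof.
move=> ha hc hz hm.
have e : a%:C * blkC a b z zc x y =
   (a%:C * x + zc * y) * Num.conj (a%:C * x + zc * y) + (a * b - m)%:C * (y * Num.conj y).
  rewrite rmorphD !rmorphM /= hc -[Num.conj a%:C]/(conjc a%:C) conjc_real /blkC.
  rewrite rmorphB rmorphM /= -hz; ring.
have : 0 <= a%:C * blkC a b z zc x y.
  rewrite e; apply: addr_ge0; first exact: mulcJ_ge0.
  apply: mulr_ge0; last exact: mulcJ_ge0.
  by rewrite ler0c subr_ge0.
by rewrite pmulr_rge0 // ltcR.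
Qed.


Definition Gdef (R : rcfType) (kr s2 s3 : R) (u0 u1 u2 u3 u4 : R[i]) : R[i] :=
  let e : R := 1 - 2 * (206 / 10000) in
  let t : R := kr^-1 in
  blkC (1/9) 1 ('i * (t * (1/3) * e)%:C) (- 'i * (t * (1/3) * e)%:C) u0 u1
  + blkC (1/2) (4/9) (s2/3)%:C (s2/3)%:C u0 u2
  + blkC (1/4) (2/9) (-s2/6)%:C (-s2/6)%:C u1 u3
  + blkC (3/100) 1 ('i * (t * (1/6) * e)%:C) (- 'i * (t * (1/6) * e)%:C) u2 u3
  + blkC (3/50) (19/10) (1/3)%:C (1/3)%:C u2 u4
  + (2/3 - 2 * (206/10000) - 1/9 - 1/2)%:C * (u0 * Num.conj u0)
  + (4/3 - 2 * (206/10000) - 1 - 1/4)%:C * (u1 * Num.conj u1)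
  + (s3/3 - 2 * (206/10000) - 4/9 - 3/100 - 3/50)%:C * (u2 * Num.conj u2)
  + (2 - s3/3 - 2 * (206/10000) - 2/9 - 1)%:C * (u3 * Num.conj u3)
  + (2 - 2 * (206/10000) - 19/10)%:C * (u4 * Num.conj u4).

Arguments Gdef {R}.

Lemma GEq (R : rcfType) (kr s2 s3 : R) (u0 u1 u2 u3 u4 : R[i]) : kr != 0 ->
  Gdef kr s2 s3 u0 u1 u2 u3 u4 = - (2 * (206 / 10000))%:C * (u0 * (u0)^*) + (((-2 * -1)%:C - (2 * (206 / 10000))%:C) * (u1 * (u1)^*) + (- (2 * (206 / 10000))%:C * (u2 * (u2)^*) + (((-2 * -1)%:C - (2 * (206 / 10000))%:C) * (u3 * (u3)^*) + ((-2 * -1)%:C - (2 * (206 / 10000))%:C) * (u4 * (u4)^*)))) + ('i * kr%:C * (1%:C * u1) * (- 'i * (1 / 3)%:C * (kr^-1)%:C * u1)^* + - 'i * (1 / 3)%:C * (kr^-1)%:C * u1 * ('i * kr%:C * (1%:C * u1))^* - (2 * (206 / 10000))%:C * (u0 * (- 'i * (1 / 3)%:C * (kr^-1)%:C * u1)^*) + (('i * kr%:C * (1%:C * u0 + s2%:C * u2) - (-1)%:C * u1) * ('i * (1 / 3)%:C * (kr^-1)%:C * u0)^* + 'i * (1 / 3)%:C * (kr^-1)%:C * u0 * ('i * kr%:C * (1%:C * u0 + s2%:C * u2) - (-1)%:C * u1)^* - (2 * (206 / 10000))%:C * (u1 * ('i * (1 / 3)%:C * (kr^-1)%:C * u0)^*)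 + ('i * kr%:C * (s2%:C * u1 + s3%:C * u3) * (- 'i * (1 / 3)%:C * ((2 * kr)^-1)%:C * u3)^* + - 'i * (1 / 3)%:C * ((2 * kr)^-1)%:C * u3 * ('i * kr%:C * (s2%:C * u1 + s3%:C * u3))^* - (2 * (206 / 10000))%:C * (u2 * (- 'i * (1 / 3)%:C * ((2 * kr)^-1)%:C * u3)^*) + (('i * kr%:C * (s3%:C * u2 + 2%:C * u4) - (-1)%:C * u3) * ('i * (1 / 3)%:C * ((2 * kr)^-1)%:C * u2)^* + 'i * (1 / 3)%:C * ((2 * kr)^-1)%:C * u2 * ('i * kr%:C * (s3%:C * u2 + 2%:C * u4) - (-1)%:C * u3)^* - (2 * (206 / 10000))%:C * (u3 * ('i * (1 / 3)%:C * ((2 * kr)^-1)%:C * u2)^*))))).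
Proof.
move=> hk.
have si : ('i : R[i]) ^+ 2 = -1 by exact: sqr_i.
have ci : Num.conj ('i : R[i]) = - 'i by apply/eqP; rewrite eq_complex /= oppr0 !eqxx.
have cR : forall r : R, Num.conj (r%:C) = r%:C by move=> r; rewrite -[Num.conj _]/(conjc _) conjc_real.
have ck := cR kr; have cki := cR kr^-1; have cs2 := cR s2; have cs3 := cR s3.
have ck2 := cR (2 * kr)^-1.
rewrite /Gdef /blkC.
field: si ci ck cki cs2 cs3 ck2.
by rewrite !fmorph_eq0 hk.
Qed.

Lemma Gpos (R : rcfType) (kr s2 s3 : R) (u0 u1 u2 u3 u4 : R[i]) :
  kr != 0 -> 1 <= kr ^+ 2 -> s2 ^+ 2 = 2 -> s3 ^+ 2 = 3 -> 0 <= s3 ->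
  0 <= Gdef kr s2 s3 u0 u1 u2 u3 u4.
Proof.
move=> hk hk2 hs2 hs3 hs3p.
have si : ('i : R[i]) ^+ 2 = -1 by exact: sqr_i.
have ci : Num.conj ('i : R[i]) = - 'i by apply/eqP; rewrite eq_complex /= oppr0 !eqxx.
have cR : forall r : R, Num.conj (r%:C) = r%:C by move=> r; rewrite -[Num.conj _]/(conjc _) conjc_real.
have ht2 : kr^-1 ^+ 2 <= 1.
  have kp : 0 < kr ^+ 2 by lra.
  by rewrite exprVn invf_le1.
have s3l : 1727 / 1000 <= s3 by nra.
have s3u : s3 <= 2 by nra.
have cz : forall c : R, Num.conj (- 'i * c%:C) = 'i * c%:C.
  by move=> c; rewrite rmorphM rmorphN /= ci cR opprK.
have zz : forall c : R, 'i * c%:C * (- 'i * c%:C) = (c ^+ 2)%:C.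
  by move=> c; ring: si.
have rr : forall c : R, c%:C * c%:C = (c * c)%:C by move=> c; rewrite rmorphM.
rewrite /Gdef; cbv zeta; rewrite [blkC]lock.
set t := kr^-1.
repeat apply: addr_ge0.
- rewrite -lock; apply: blkC_ge0 (cz _) (zz _) _; first lra.
  have -> : (t * (1/3) * (1 - 2 * (206 / 10000))) ^+ 2 = t ^+ 2 * ((1 - 2 * (206 / 10000)) ^+ 2 / 9) by field.
  have hc : 0 <= (1 - 2 * (206 / 10000)) ^+ 2 / 9 :> R by rewrite expr2; lra.
  apply: le_trans (ler_wpM2r hc ht2) _; rewrite mul1r expr2; lra.
- rewrite -lock; apply: blkC_ge0 (cR _) (rr _) _; first lra.
  have -> : s2 / 3 * (s2 / 3) = s2 ^+ 2 / 9 by field.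
  rewrite hs2; lra.
- rewrite -lock; apply: blkC_ge0 (cR _) (rr _) _; first lra.
  have -> : - s2 / 6 * (- s2 / 6) = s2 ^+ 2 / 36 by field.
  rewrite hs2; lra.
- rewrite -lock; apply: blkC_ge0 (cz _) (zz _) _; first lra.
  have -> : (t * (1/6) * (1 - 2 * (206 / 10000))) ^+ 2 = t ^+ 2 * ((1 - 2 * (206 / 10000)) ^+ 2 / 36) by field.
  have hc : 0 <= (1 - 2 * (206 / 10000)) ^+ 2 / 36 :> R by rewrite expr2; lra.
  apply: le_trans (ler_wpM2r hc ht2) _; rewrite mul1r expr2; lra.
- rewrite -lock; apply: blkC_ge0 (cR _) (rr _) _; lra.
- apply: mulr_ge0; last exact: mulcJ_ge0; rewrite ler0c; lra.
- apply: mulr_ge0; last exact: mulcJ_ge0; rewrite ler0c; lra.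
- apply: mulr_ge0; last exact: mulcJ_ge0; rewrite ler0c; lra.
- apply: mulr_ge0; last exact: mulcJ_ge0; rewrite ler0c; lra.
- apply: mulr_ge0; last exact: mulcJ_ge0; rewrite ler0c; lra.
Qed.

Theorem lemma4 (R : rcfType) (k : int) (N : nat) (u : nat -> R[i]) :
  k != 0 ->
  (forall j, (N <= j)%N -> u j = 0) ->
  let alpha : R[i] := (1 / 3 : R)%:C in
  let beta : R[i] := (1 / 3 : R)%:C in
  let mu : R[i] := (206 / 10000 : R)%:C in
  let Cu := mapply N (Cmat k) u in
  let Pu := mapply N (Pmat alpha beta k) u in
  inner (N + 4) Cu Pu + inner (N + 4) Pu Cu >= 2 * mu * inner (N + 4) u Pu.
Proof.
move=> hk hu; cbv zeta.
set alpha := (1 / 3 : R)%:C.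
set mu := (206 / 10000 : R)%:C.
set Cu := mapply N (Cmat k) u.
set Pu := mapply N (Pmat alpha alpha k) u.
set M := (N + 4)%N.
set kc : R[i] := k%:~R.
set w : R[i] := 'i * kc.
pose Lu m := mapply N L1 u m.
pose sq (n : nat) : R[i] := (Num.sqrt (n%:R : R))%:C.
pose l3 m : R[i] := L3 m m.
pose a m := mapply N (fun m j => Pmat alpha alpha k m j - (m == j)%:R) u m.
have mapply_ext : forall A m n, (N <= n)%N -> mapply N A u m = \sum_(j < n) A m j * u j.
  move=> A m n hn; rewrite /mapply (@sum_ext _ N n (fun j => A m j * u j) hn) //.
  by move=> j /hu ->; rewrite mulr0.
have Cu_eq : forall m, Cu m = w * Lu m - l3 m * u m.
  move=> m; rewrite /Cu /Lu /mapply /Cmat.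
  rewrite (eq_bigr (fun j : 'I_N => w * (L1 m j * u j) - L3 m j * u j)); last first.
    by move=> j _; rewrite mulrBl mulrA.
  rewrite sumrB -mulr_sumr; congr (_ - _).
  rewrite (@sum_ext _ N (N + m.+1) (fun j => L3 m j * u j)) ?leq_addr //; last first.
    by move=> j /hu ->; rewrite mulr0.
  rewrite (@sum1 _ _ (fun j => L3 m j * u j) m) //.
    by rewrite addnS ltnS leq_addl.
  by move=> j hj; rewrite /L3 eq_sym (negbTE hj) mul0r.
have Pu_eq : forall m, Pu m = u m + a m.
  move=> m; rewrite /Pu /a /mapply.
  have -> : \sum_(j<N) Pmat alpha alpha k m j * u j =
     \sum_(j<N) ((m == j)%:R * u j + (Pmat alpha alpha k m j - (m == j)%:R) * u j).
    by apply: eq_bigr => j _; rewrite -mulrDl addrC subrK.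
  rewrite big_split /=; congr (_ + _).
  rewrite (@sum_ext _ N (N + m.+1) (fun j => (m == j)%:R * u j)) ?leq_addr //; last first.
    by move=> j /hu ->; rewrite mulr0.
  rewrite (@sum1 _ _ (fun j => (m == j)%:R * u j) m).
  - by rewrite eqxx mul1r.
  - by rewrite addnS ltnS leq_addl.
  - by move=> j hj; rewrite eq_sym (negbTE hj) mul0r.
have a4 : forall m, (4 <= m)%N -> a m = 0.
  move=> m hm; rewrite /a /mapply big1 // => j _.
  case: m hm => [|[|[|[|m]]]] // _; rewrite /Pmat /=.
  by case: (m.+4 == j); rewrite /= ?subrr ?subr0 ?mul0r.
have a0 : a 0%N = (- 'i * alpha / kc) * u 1%N.
  rewrite /a (mapply_ext _ _ (N + 4)%N) ?leq_addr // (@sum1 _ _ (fun j => (Pmat alpha alpha k 0 j - (0 == j)%:R) * u j) 1%N); last 2 first.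
  - by rewrite addn4.
  - by move=> [|[|j]] //= _; rewrite ?subrr ?subr0 ?mul0r.
  by rewrite /Pmat /= subr0.
have a1 : a 1%N = ('i * alpha / kc) * u 0%N.
  rewrite /a (mapply_ext _ _ (N + 4)%N) ?leq_addr // (@sum1 _ _ (fun j => (Pmat alpha alpha k 1 j - (1 == j)%:R) * u j) 0%N); last 2 first.
  - by rewrite addn4.
  - by move=> [|[|[|[|j]]]] //= _; rewrite ?subrr ?subr0 ?mul0r.
  by rewrite /Pmat /= subr0.
have a2 : a 2%N = (- 'i * alpha / (2 * kc)) * u 3%N.
  rewrite /a (mapply_ext _ _ (N + 4)%N) ?leq_addr // (@sum1 _ _ (fun j => (Pmat alpha alpha k 2 j - (2 == j)%:R) * u j) 3%N); last 2 first.
  - by rewrite addn4.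
  - by move=> [|[|[|[|j]]]] //= _; rewrite ?subrr ?subr0 ?mul0r.
  by rewrite /Pmat /= subr0.
have a3 : a 3%N = ('i * alpha / (2 * kc)) * u 2%N.
  rewrite /a (mapply_ext _ _ (N + 4)%N) ?leq_addr // (@sum1 _ _ (fun j => (Pmat alpha alpha k 3 j - (3 == j)%:R) * u j) 2%N); last 2 first.
  - by rewrite addn4.
  - by move=> [|[|[|[|j]]]] //= _; rewrite ?subrr ?subr0 ?mul0r.
  by rewrite /Pmat /= subr0.
have Lu0 : Lu 0%N = sq 1%N * u 1%N.
  rewrite /Lu (mapply_ext _ _ (N + 5)%N) ?leq_addr // (@sum1 _ _ (fun j => L1 0 j * u j) 1%N); last 2 first.
  - lia.
  - by move=> [|[|[|[|[|j]]]]] //= _; rewrite ?mul0r.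
  by rewrite /L1 /=.
have Lu1 : Lu 1%N = sq 1%N * u 0%N + sq 2%N * u 2%N.
  rewrite /Lu (mapply_ext _ _ (N + 5)%N) ?leq_addr // (@sum2 _ _ (fun j => L1 1 j * u j) 0%N 2%N); last 4 first.
  - lia.
  - lia.
  - by [].
  - by move=> [|[|[|[|[|[|j]]]]]] //= _ _; rewrite ?mul0r.
  by rewrite /L1 /=.
have Lu2 : Lu 2%N = sq 2%N * u 1%N + sq 3%N * u 3%N.
  rewrite /Lu (mapply_ext _ _ (N + 5)%N) ?leq_addr // (@sum2 _ _ (fun j => L1 2 j * u j) 1%N 3%N); last 4 first.
  - lia.
  - lia.
  - by [].
  - by move=> [|[|[|[|[|[|j]]]]]] //= _ _; rewrite ?mul0r.
  by rewrite /L1 /=.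
have Lu3 : Lu 3%N = sq 3%N * u 2%N + sq 4%N * u 4%N.
  rewrite /Lu (mapply_ext _ _ (N + 5)%N) ?leq_addr // (@sum2 _ _ (fun j => L1 3 j * u j) 2%N 4%N); last 4 first.
  - lia.
  - lia.
  - by [].
  - by move=> [|[|[|[|[|[|j]]]]]] //= _ _; rewrite ?mul0r.
  by rewrite /L1 /=.
have eL : forall m, Lu m = \sum_(j < M) L1 m j * u j.
  by move=> m; rewrite /Lu (mapply_ext _ _ M) // /M leq_addr.
have sym : inner M Lu u = inner M u Lu.
  rewrite /inner.
  transitivity (\sum_(m < M) \sum_(j < M) L1 m j * u j * (u m)^*).
    by apply: eq_bigr => m _; rewrite eL mulr_suml.
  transitivity (\sum_(m < M) \sum_(j < M) u m * (L1 m j * (u j)^*)); last first.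
    apply: eq_bigr => m _; rewrite eL rmorph_sum mulr_sumr; apply: eq_bigr => j _.
    by rewrite rmorphM /= L1R.
  rewrite exchange_big /=; apply: eq_bigr => m _; apply: eq_bigr => j _.
  by rewrite L1C; ring.
have ci : Num.conj ('i : R[i]) = - 'i.
  by apply/eqP; rewrite eq_complex /= oppr0 !eqxx.
have cw : Num.conj w = - w.
  by rewrite /w /kc rmorphM /= rmorph_int ci mulNr.
have wE : w = 'i * kc by [].
clearbody w.
have cl3 : forall m, Num.conj (l3 m) = l3 m.
  by move=> m; rewrite /l3 /L3 eqxx; case: ifP => _; rewrite ?rmorphN ?rmorph0 ?rmorph1.
have cmu : Num.conj mu = mu by rewrite conjE conjc_real.
pose g m := (- 2 * l3 m - 2 * mu) * (u m * Num.conj (u m)).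
pose h m := Cu m * Num.conj (a m) + a m * Num.conj (Cu m) - 2 * mu * (u m * Num.conj (a m)).
have key : inner M Cu Pu + inner M Pu Cu - 2 * mu * inner M u Pu =
    w * (inner M Lu u - inner M u Lu) + \sum_(m < M) g m + \sum_(m < M) h m.
  rewrite /inner.
  transitivity (\sum_(m < M) (Cu m * Num.conj (Pu m) + Pu m * Num.conj (Cu m)
                  - 2 * mu * (u m * Num.conj (Pu m)))).
    by rewrite mulr_sumr -big_split -sumrB.
  rewrite -sumrB mulr_sumr -!big_split; apply: eq_bigr => m _ /=.
  rewrite /g /h !Pu_eq !Cu_eq !rmorphD ?rmorphB ?rmorphN !rmorphM /= cw cl3.
  ring.
rewrite -subr_ge0 key sym subrr mulr0 add0r.
rewrite -(@sum_ext _ 4 M h); first last.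
- by move=> j hj; rewrite /h a4 // rmorph0 !mulr0 mul0r !subr0 addr0.
- by rewrite /M leq_addl.
rewrite (@sum_ext _ M (5 + N) g); first last.
- by move=> j hj; rewrite /g hu ?mul0r ?mulr0 //; move: hj; rewrite /M; lia.
- by rewrite /M addnC.
rewrite big_split_ord /= addrAC; apply: addr_ge0; last first.
  apply: sumr_ge0 => i _; rewrite /g /l3 /L3 /=.
  apply: mulr_ge0; last exact: mulcJ_ge0.
  rewrite eqxx.
  rewrite mulrNN mulr1 /mu -[2 : R[i]](rmorph_nat (real_complex R) 2) -rmorphM -rmorphB ler0c; lra.
rewrite !big_ord_recl big_ord0 /=.
rewrite /bump /= big_ord0 addr0.
rewrite /g /h !Cu_eq Lu0 Lu1 Lu2 Lu3 a0 a1 a2 a3 /l3 /L3 /=.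
have s1 : sq 1%N = 1 by rewrite /sq sqrtr1 rmorph1.
have s4 : sq 4%N = 2.
  rewrite /sq -[4%:R]/((2 ^ 2)%N%:R : R) natrX sqrtr_sqr ger0_norm //.
  by rewrite -[2 : R[i]](rmorph_nat (real_complex R) 2).
rewrite s1 s4 wE /kc -(rmorph_int (real_complex R) k) /alpha /mu.
set kr := (k%:~R : R).
rewrite /sq.
set s2 := Num.sqrt (2%:R : R).
set s3 := Num.sqrt (3%:R : R).
rewrite -[2 : R[i]](rmorph_nat (real_complex R) 2) -[1 : R[i]](rmorph1 (real_complex R)).
rewrite -?rmorphN -!rmorphM -?fmorphV.
rewrite -[(1+0)%N]/1%N -[(1+(1+0))%N]/2%N -[(1+(1+(1+0)))%N]/3%N -[(1+(1+(1+(1+0))))%N]/4%N.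
rewrite ?mul0r ?mulr0 ?subr0 ?addr0 ?sub0r.
have hkr : kr != 0 by rewrite intr_eq0.
have hk2 : 1 <= kr ^+ 2.
  rewrite /kr -rmorphXn /= ler1z expr2.
  by move: hk; lia.
have hs2 : s2 ^+ 2 = 2 by rewrite sqr_sqrtr // ler0n.
have hs3 : s3 ^+ 2 = 3 by rewrite sqr_sqrtr // ler0n.
have hs3p : 0 <= s3 by rewrite sqrtr_ge0.
have := @Gpos R kr s2 s3 (u 0%N) (u 1%N) (u 2%N) (u 3%N) (u 4%N) hkr hk2 hs2 hs3 hs3p.
by rewrite GEq.
Qed.
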